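(* Let $\Pi$ be the elliptic curve $u^2=(2s+1)(9s^2+2s+1)$ and define rational functions on $\Pi$ $$y=\frac12+\frac{45s^6+20s^5+95s^4+92s^3+39s^2-3}{4(5s^2+1)(s+1)^2\,u},\qquad t=\frac12+\frac{s(2s+1)^2(27s^4+28s^3+26s^2+12s+3)}{(s+1)^3u^3}.$$ Then, using $t$ as a local coordinate on $\Pi$ away from its critical points, $y(t)$ is a solution of $\mathrm{P}_{\mathrm{VI}}$ with parameters $(\theta_1,\theta_2,\theta_3,\theta_4)=(1/2,1/2,1/2,2/3)$.
   Context: $\mathrm{P}_{\mathrm{VI}}$ is the equation $$\frac{d^2y}{dt^2}=\frac12\Big(\frac1y+\frac1{y-1}+\frac1{y-t}\Big)\Big(\frac{dy}{dt}\Big)^2-\Big(\frac1t+\frac1{t-1}+\frac1{y-t}\Big)\frac{dy}{dt}+\frac{y(y-1)(y-t)}{t^2(t-1)^2}\Big(\alpha+\beta\frac{t}{y^2}+\gamma\frac{t-1}{(y-1)^2}+\delta\frac{t(t-1)}{(y-t)^2}\Big),$$ with $\alpha=(\theta_4-1)^2/2$, $\beta=-\theta_1^2/2$, $\gamma=\theta_3^2/2$, $\delta=(1-\theta_2^2)/2$. When $y,t$ are given as rational functions of a parameter on a curve, derivatives with respect to $t$ are computed via the chain rule. *)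

(* Defs.v *)
From mathcomp Require Import all_boot all_order all_algebra.
Set Implicit Arguments. Unset Strict Implicit. Unset Printing Implicit Defensive.
Import Order.TTheory GRing.Theory Num.Theory.
Local Open Scope ring_scope.

Definition derivation (K : fieldType) (D : K -> K) : Prop :=
  (forall a b : K, D (a + b) = D a + D b) /\
  (forall a b : K, D (a * b) = D a * b + a * D b).

Definition on_Pi (K : fieldType) (s u : K) : Prop :=
  u ^+ 2 = (2 * s + 1) * (9 * s ^+ 2 + 2 * s + 1).

Definition y_Pi (K : fieldType) (s u : K) : K :=
  1 / 2 + (45 * s ^+ 6 + 20 * s ^+ 5 + 95 * s ^+ 4 + 92 * s ^+ 3 + 39 * s ^+ 2 - 3)
          / (4 * (5 * s ^+ 2 + 1) * (s + 1) ^+ 2 * u).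

Definition t_Pi (K : fieldType) (s u : K) : K :=
  1 / 2 + s * (2 * s + 1) ^+ 2 * (27 * s ^+ 4 + 28 * s ^+ 3 + 26 * s ^+ 2 + 12 * s + 3)
          / ((s + 1) ^+ 3 * u ^+ 3).

(* The Painleve VI equation, with y1 = dy/dt and y2 = d^2y/dt^2. *)
Definition PVI (K : fieldType) (th1 th2 th3 th4 : K) (t y y1 y2 : K) : Prop :=
  let alpha := (th4 - 1) ^+ 2 / 2 in
  let beta := - (th1 ^+ 2) / 2 in
  let gamma := th3 ^+ 2 / 2 in
  let delta := (1 - th2 ^+ 2) / 2 in
  y2 = 1 / 2 * (1 / y + 1 / (y - 1) + 1 / (y - t)) * y1 ^+ 2
       - (1 / t + 1 / (t - 1) + 1 / (y - t)) * y1
       + y * (y - 1) * (y - t) / (t ^+ 2 * (t - 1) ^+ 2)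
         * (alpha + beta * t / y ^+ 2 + gamma * (t - 1) / (y - 1) ^+ 2
            + delta * t * (t - 1) / (y - t) ^+ 2).

(* Main.v *)
Require Import Defs.
From mathcomp Require Import all_boot all_order all_algebra.
From mathcomp Require Import ring.
Import Order.TTheory GRing.Theory Num.Theory.
Local Open Scope ring_scope.

Lemma DD {K : fieldType} {D : K -> K} (HD : derivation D) a b : D (a + b) = D a + D b.
Proof. exact: HD.1. Qed.
Lemma DM {K : fieldType} {D : K -> K} (HD : derivation D) a b : D (a * b) = D a * b + a * D b.
Proof. exact: HD.2. Qed.
Lemma D0 {K : fieldType} {D : K -> K} (HD : derivation D) : D 0 = 0.
Proof. have h := DD HD 0 0; rewrite addr0 in h. by apply: (addrI (D 0)); rewrite addr0 -h. Qed.
Lemma D1 {K : fieldType} {D : K -> K} (HD : derivation D) : D 1 = 0.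
Proof. have h := DM HD 1 1; rewrite mulr1 mulr1 mul1r in h. by apply: (addrI (D 1)); rewrite addr0 -h. Qed.
Lemma Dnat {K : fieldType} {D : K -> K} (HD : derivation D) n : D (n%:R) = 0.
Proof. elim: n => [|n IH]; first exact: D0. by rewrite mulrS (DD HD) IH (D1 HD) addr0. Qed.
Lemma DN {K : fieldType} {D : K -> K} (HD : derivation D) a : D (- a) = - D a.
Proof. have h := DD HD a (- a); rewrite subrr (D0 HD) in h. by apply/eqP; rewrite -addr_eq0 addrC -h. Qed.
Lemma DB {K : fieldType} {D : K -> K} (HD : derivation D) a b : D (a - b) = D a - D b.
Proof. by rewrite (DD HD) (DN HD). Qed.
Lemma DXS {K : fieldType} {D : K -> K} (HD : derivation D) a n : D (a ^+ n.+1) = n.+1%:R * a ^+ n * D a.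
Proof.
elim: n => [|n IH]; first by rewrite expr1 expr0 mulr1 mul1r.
rewrite exprS (DM HD) IH [n.+2%:R]mulrS [n.+1%:R]mulrS. by rewrite !exprS; ring.
Qed.
Lemma DX0 {K : fieldType} {D : K -> K} (HD : derivation D) a : D (a ^+ 0) = 0.
Proof. by rewrite expr0 (D1 HD). Qed.
Lemma DV {K : fieldType} {D : K -> K} (HD : derivation D) a : a != 0 -> D (a ^-1) = - D a / a ^+ 2.
Proof.
move=> Ha. have h := DM HD a (a^-1). rewrite mulfV // (D1 HD) in h.
have -> : D a^-1 = a^-1 * (a * D a^-1) by field.
have -> : a * D a^-1 = - (D a * a^-1) by apply/eqP; rewrite -addr_eq0 addrC -h.
by field.
Qed.
Lemma Dnatinv {K : fieldType} {D : K -> K} (HD : derivation D) n : D (n%:R ^-1) = 0.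
Proof.
case: (eqVneq (n%:R : K) 0) => [->|Hn]; first by rewrite invr0 (D0 HD).
by rewrite (DV HD _ Hn) (Dnat HD) oppr0 mul0r.
Qed.

Lemma neq0_eq {K : fieldType} {x y : K} : x = y -> y != 0 -> x != 0.
Proof. by move=> ->. Qed.
Ltac nzh H := try solve [apply: (neq0_eq _ H); ring].
Ltac nzc := repeat (apply/andP; split); try done.
Ltac dsimpin HD h := rewrite ?(Dnat HD, Dnatinv HD, D1 HD, D0 HD, DD HD, DM HD, DB HD, DN HD, DXS HD, DX0 HD) in h.
Ltac dsimp HD := rewrite ?(Dnat HD, Dnatinv HD, D1 HD, D0 HD, DD HD, DM HD, DB HD, DN HD, DXS HD, DX0 HD).

Lemma genL (K : fieldType) (Hn : forall n : nat, (n.+1%:R : K) != 0)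
  (a b c g u P Ya Tb AB : K) :
  P = u ^+ 2 -> Ya = a ^+ 2 * P - 1/4 -> Tb = b ^+ 2 * P - 1/4 -> AB = a - b ->
  u != 0 -> Ya != 0 -> Tb != 0 -> AB != 0 ->
  g = (a / Ya + 1 / (2 * AB * P)) * c ^+ 2 - (2 * b / Tb + 1 / (AB * P)) * c
      + Ya * AB / Tb ^+ 2 * (1/18 + 1/8 * (- (1/4) - a ^+ 2 * P + 2 * a * b * P) / Ya ^+ 2
                              + 3/8 * Tb / (AB ^+ 2 * P)) ->
  PVI (1 / 2) (1 / 2) (1 / 2) (2 / 3) (1/2 + b * u) (1/2 + a * u) c (g * u).
Proof.
move=> -> -> -> -> Hu HYa HTb HAB ->.
have H4 : (4 : K) != 0 := Hn 3.
have HA : (a * u) ^+ 2 * 4 - 1 != 0.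
  have -> : (a * u) ^+ 2 * 4 - 1 = 4 * (a ^+ 2 * u ^+ 2 - 1/4) by field.
  by rewrite mulf_neq0.
have HB : (b * u) ^+ 2 * 4 - 1 != 0.
  have -> : (b * u) ^+ 2 * 4 - 1 = 4 * (b ^+ 2 * u ^+ 2 - 1/4) by field.
  by rewrite mulf_neq0.
have HA' : (a * u) ^+ 2 * 4 - 1 = (1 + a * u * 2) * (1 + a * u * 2 - 2) by ring.
have HB' : (b * u) ^+ 2 * 4 - 1 = (1 + b * u * 2) * (1 + b * u * 2 - 2) by ring.
move: (HA) (HB); rewrite HA' HB' !mulf_eq0 !negb_or => /andP[HA1 HA2] /andP[HB1 HB2].
have HAB' : 1 + a * u * 2 - (1 + b * u * 2) != 0.
  have -> : 1 + a * u * 2 - (1 + b * u * 2) = (a - b) * u * 2 by ring.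
  by rewrite !mulf_neq0 // (Hn 1).
rewrite /PVI.
field.
by rewrite HA HB HA1 HA2 HB1 HB2 HAB' Hu HAB H4 (Hn 1) (Hn 2) (Hn 7) (Hn 17).
Qed.

Notation Nbeta s := (3 + 24 * s + 54 * s ^+ 2 - 12 * s ^+ 3 - (68 + 100 * 1) * s ^+ 4 - (44 + 100 * 1) * s ^+ 5 + (62 + 100 * 1) * s ^+ 6 + (24 + 100 * 3) * s ^+ 7 - (43 + 100 * 2) * s ^+ 8).
Notation Nal s := (12 + (77 + 100 * 1) * s + (18 + 100 * 9) * s ^+ 2 + (65 + 100 * 28) * s ^+ 3 + (40 + 100 * 56) * s ^+ 4 + (6 + 100 * 48) * s ^+ 5 - (88 + 100 * 53) * s ^+ 6 - (70 + 100 * (49 + 100 * 1)) * s ^+ 7 - (60 + 100 * (2 + 100 * 1)) * s ^+ 8 + (25 + 100 * 20) * s ^+ 9 + (50 + 100 * (21 + 100 * 1)) * s ^+ 10 + (25 + 100 * 20) * s ^+ 11).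
Notation Nc s := (12 + (13 + 100 * 2) * s + (81 + 100 * 15) * s ^+ 2 + (74 + 100 * 76) * s ^+ 3 + (26 + 100 * (59 + 100 * 2)) * s ^+ 4 + (3 + 100 * (15 + 100 * 6)) * s ^+ 5 + (55 + 100 * (68 + 100 * 9)) * s ^+ 6 + (92 + 100 * (24 + 100 * 7)) * s ^+ 7 - (84 + 100 * (11 + 100 * 7)) * s ^+ 8 - (17 + 100 * (19 + 100 * 24)) * s ^+ 9 - (65 + 100 * (93 + 100 * 22)) * s ^+ 10 - (90 + 100 * (15 + 100 * 3)) * s ^+ 11 + (50 + 100 * (79 + 100 * 15)) * s ^+ 12 + (25 + 100 * (16 + 100 * 13)) * s ^+ 13 + (25 + 100 * (82 + 100 * 1)) * s ^+ 14).
Notation Nga s := ((79 + 100 * 2) + (18 + 100 * 63) * s + (24 + 100 * (41 + 100 * 7)) * s ^+ 2 + (12 + 100 * (95 + 100 * 55)) * s ^+ 3 + (60 + 100 * (19 + 100 * (99 + 100 * 2))) * s ^+ 4 + (80 + 100 * (86 + 100 * (2 + 100 * 12))) * s ^+ 5 + (62 + 100 * (93 + 100 * (51 + 100 * 37))) * s ^+ 6 + (60 + 100 * (65 + 100 * (90 + 100 * 91))) * s ^+ 7 + (15 + 100 * (30 + 100 * (40 + 100 * (76 + 100 * 1)))) * s ^+ 8 + (38 + 100 * (42 + 100 * (84 + 100 * (59 + 100 * 2)))) * s ^+ 9 + (46 + 100 * (39 + 100 * (56 + 100 * (73 + 100 * 2)))) * s ^+ 10 + (76 + 100 * (61 + 100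 * (91 + 100 * (41 + 100 * 1)))) * s ^+ 11 - (72 + 100 * (44 + 100 * (34 + 100 * (74 + 100 * 1)))) * s ^+ 12 - (60 + 100 * (57 + 100 * (34 + 100 * (40 + 100 * 7)))) * s ^+ 13 - (56 + 100 * (45 + 100 * (86 + 100 * (57 + 100 * 17)))) * s ^+ 14 - (88 + 100 * (58 + 100 * (90 + 100 * (86 + 100 * 29)))) * s ^+ 15 - (79 + 100 * (47 + 100 * (92 + 100 * (35 + 100 * 26)))) * s ^+ 16 + (50 + 100 * (78 + 100 * (94 + 100 * (86 + 100 * 16)))) * s ^+ 17 + (20 + 100 * (75 + 100 * (98 + 100 * (2 + 100 * 84)))) * s ^+ 18 + (40 + 100 * (76 + 100 * (76 + 100 * (50 + 100 * 91)))) * s ^+ 19 - (100 * (24 + 100 * (78 + 100 * (94 + 100 * 11)))) * s ^+ 20 - (100 * (82 + 100 * (74 + 100 * (8 + 100 * (6 + 100 * 1))))) * s ^+ 21 - (50 + 100 * (17 + 100 * (26 + 100 * (41 + 100 * 64)))) * s ^+ 22 + (100 * (80 + 100 * (22 + 100 * (83 + 100 * 22)))) * s ^+ 23 + (25 + 100 * (1 + 100 * (81 + 100 * (71 + 100 * 38)))) * s ^+ 24 + (50 + 100 * (62 + 100 * (5 + 100 * (69 + 100 * 3)))) * s ^+ 25 - (50 + 100 * (37 + 100 * (43 + 100 * (21 + 100 * 2)))) * s ^+ 26).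
Notation Ng s := ((79 + 100 * 2) + (50 + 100 * 85) * s + (44 + 100 * (69 + 100 * 13)) * s ^+ 2 + (4 + 100 * (29 + 100 * (47 + 100 * 1))) * s ^+ 3 + (94 + 100 * (41 + 100 * (79 + 100 * 11))) * s ^+ 4 + (96 + 100 * (89 + 100 * (38 + 100 * 74))) * s ^+ 5 + (26 + 100 * (81 + 100 * (33 + 100 * (82 + 100 * 3)))) * s ^+ 6 + (28 + 100 * (49 + 100 * (42 + 100 * (36 + 100 * 16)))) * s ^+ 7 + (34 + 100 * (73 + 100 * (9 + 100 * (14 + 100 * 59)))) * s ^+ 8 + (84 + 100 * (32 + 100 * (54 + 100 * (99 + 100 * (81 + 100 * 1))))) * s ^+ 9 + (62 + 100 * (10 + 100 * (40 + 100 * (76 + 100 * (78 + 100 * 4))))) * s ^+ 10 + (52 + 100 * (81 + 100 * (24 + 100 * (27 + 100 * (76 + 100 * 10))))) * s ^+ 11 + (50 + 100 * (38 + 100 * (9 + 100 * (89 + 100 * (55 + 100 * 20))))) * s ^+ 12 + (12 + 100 * (10 + 100 * (75 + 100 * (63 + 100 * (87 + 100 * 32))))) * s ^+ 13 + (70 + 100 * (12 + 100 * (14 + 100 * (94 + 100 * (38 + 100 * 42))))) * s ^+ 14 + (12 + 100 * (81 + 100 * (62 + 100 * (11 + 100 * (2 + 100 * 39))))) * s ^+ 15 + (24 + 100 * (55 + 100 * (68 + 100 * (72 + 100 * (42 + 100 * 9))))) * s ^+ 16 - (20 + 100 * (19 + 100 * (99 + 100 * (34 + 100 * (30 + 100 *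 59))))) * s ^+ 17 - (54 + 100 * (19 + 100 * (77 + 100 * (55 + 100 * (38 + 100 * (71 + 100 * 1)))))) * s ^+ 18 - (96 + 100 * (98 + 100 * (62 + 100 * (7 + 100 * (21 + 100 * (1 + 100 * 3)))))) * s ^+ 19 - (6 + 100 * (21 + 100 * (57 + 100 * (75 + 100 * (21 + 100 * (60 + 100 * 3)))))) * s ^+ 20 - (24 + 100 * (83 + 100 * (97 + 100 * (26 + 100 * (55 + 100 * (1 + 100 * 2)))))) * s ^+ 21 + (86 + 100 * (73 + 100 * (27 + 100 * (7 + 100 * (96 + 100 * (51 + 100 * 2)))))) * s ^+ 22 + (32 + 100 * (92 + 100 * (19 + 100 * (54 + 100 * (44 + 100 * (94 + 100 * 7)))))) * s ^+ 23 + (46 + 100 * (35 + 100 * (10 + 100 * (68 + 100 * (51 + 100 * (33 + 100 * 9)))))) * s ^+ 24 + (80 + 100 * (39 + 100 * (26 + 100 * (78 + 100 * (79 + 100 * (55 + 100 * 3)))))) * s ^+ 25 - (30 + 100 * (44 + 100 * (22 + 100 * (99 + 100 * (76 + 100 * (39 + 100 * 5)))))) * s ^+ 26 - (60 + 100 * (15 + 100 * (32 + 100 * (81 + 100 * (97 + 100 * (21 + 100 * 9)))))) * s ^+ 27 - (50 + 100 * (96 + 100 * (83 + 100 * (18 + 100 * (82 + 100 * (17 + 100 * 5)))))) * s ^+ 28 + (100 * (83 + 100 * (92 + 100 * (54 + 100 * (18 + 100 * 86))))) * s ^+ 29 + (50 + 100 * (72 + 100 * (40 + 100 * (67 + 100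 * (50 + 100 * (97 + 100 * 2)))))) * s ^+ 30 + (100 * (80 + 100 * (65 + 100 * (71 + 100 * (94 + 100 * (67 + 100 * 1)))))) * s ^+ 31 + (25 + 100 * (51 + 100 * (6 + 100 * (2 + 100 * (21 + 100 * 30))))) * s ^+ 32 - (50 + 100 * (37 + 100 * (59 + 100 * (22 + 100 * (98 + 100 * 4))))) * s ^+ 33 - (50 + 100 * (37 + 100 * (13 + 100 * (36 + 100 * (79 + 100 * 1))))) * s ^+ 34).
Notation NYa s := (5 - 32 * s - (14 + 100 * 4) * s ^+ 2 - (64 + 100 * 12) * s ^+ 3 - (17 + 100 * 12) * s ^+ 4 + (80 + 100 * 16) * s ^+ 5 + (84 + 100 * 50) * s ^+ 6 + (8 + 100 * 26) * s ^+ 7 - (85 + 100 * 38) * s ^+ 8 - (40 + 100 * 50) * s ^+ 9 + (50 + 100 * 4) * s ^+ 10 + (25 + 100 * 20) * s ^+ 12).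
Notation NTb s := (- 1 - 12 * s - 54 * s ^+ 2 - (100 * 1) * s ^+ 3 + 9 * s ^+ 4 + (60 + 100 * 3) * s ^+ 5 + (24 + 100 * 5) * s ^+ 6 - (68 + 100 * 1) * s ^+ 7 - (71 + 100 * 10) * s ^+ 8 - (40 + 100 * 5) * s ^+ 9 + (10 + 100 * 8) * s ^+ 10 + (72 + 100 * 9) * s ^+ 11 - (29 + 100 * 7) * s ^+ 12).
Notation NAB s := (- 3 - 21 * s - 66 * s ^+ 2 - 78 * s ^+ 3 + (20 + 100 * 1) * s ^+ 4 + (36 + 100 * 3) * s ^+ 5 + (62 + 100 * 1) * s ^+ 6 - (50 + 100 * 4) * s ^+ 7 - (5 + 100 * 4) * s ^+ 8 + (5 + 100 * 4) * s ^+ 9).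
Notation f1 s := (s + 1).
Notation f5 s := (5 * s ^+ 2 + 1).
Notation f2 s := (2 * s + 1).
Notation f9 s := (9 * s ^+ 2 + 2 * s + 1).
Notation PP s := ((2 * s + 1) * (9 * s ^+ 2 + 2 * s + 1)).
Notation NA s := (45 * s ^+ 6 + 20 * s ^+ 5 + 95 * s ^+ 4 + 92 * s ^+ 3 + 39 * s ^+ 2 - 3).
Notation NB s := (s * (2 * s + 1) ^+ 2 * (27 * s ^+ 4 + 28 * s ^+ 3 + 26 * s ^+ 2 + 12 * s + 3)).
Notation a_e s := (NA s / (4 * f5 s * f1 s ^+ 2 * PP s)).
Notation b_e s := (NB s / (f1 s ^+ 3 * PP s ^+ 2)).
Notation al_e s := (Nal s / (4 * f1 s ^+ 3 * f5 s ^+ 2 * f2 s ^+ 2 * f9 s ^+ 2)).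
Notation be_e s := (Nbeta s / (f1 s ^+ 4 * f2 s * f9 s ^+ 3)).
Notation c_e s := (Nc s / (4 * f5 s ^+ 2 * f2 s * Nbeta s)).
Notation ga_e s := (Nga s / (4 * f5 s ^+ 4 * f2 s ^+ 2 * Nbeta s ^+ 2)).
Notation g_e s := (Ng s / (4 * f5 s ^+ 4 * f2 s ^+ 2 * Nbeta s ^+ 3)).
Notation Ya_e s := (NYa s / (16 * f1 s ^+ 4 * f5 s ^+ 2 * f2 s * f9 s)).
Notation Tb_e s := (NTb s / (4 * f1 s ^+ 6 * f9 s ^+ 3)).
Notation AB_e s := (NAB s / (4 * f1 s ^+ 3 * f5 s * f2 s * f9 s ^+ 2)).

Theorem mainTheorem11 (K : fieldType) (HK : [pchar K] =i pred0)
  (D : K -> K) (HD : derivation D) (s u : K) (Hcurve : on_Pi s u)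
  (Hu : u != 0) (Hs1 : s + 1 != 0) (Hs5 : 5 * s ^+ 2 + 1 != 0)
  (Ht : D (t_Pi s u) != 0)
  (Ht0 : t_Pi s u != 0) (Ht1 : t_Pi s u != 1)
  (Hy0 : y_Pi s u != 0) (Hy1 : y_Pi s u != 1) (Hyt : y_Pi s u != t_Pi s u) :
  let t := t_Pi s u in
  let y := y_Pi s u in
  let y1 := D y / D t in
  let y2 := D y1 / D t in
  PVI (1 / 2) (1 / 2) (1 / 2) (2 / 3) t y y1 y2.
Proof.
move=> t y y1 y2.
have Hn : forall n : nat, (n.+1%:R : K) != 0.
  by move=> n; move/(pcharf0P K): HK => ->.
have H2 := Hn 1. have H4 := Hn 3.
rewrite /on_Pi in Hcurve.
have HP0 : PP s != 0 by rewrite -Hcurve expf_neq0.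
have [Hf2 Hf9] : (f2 s != 0) /\ (f9 s != 0).
  by move: HP0; rewrite mulf_eq0 negb_or => /andP.
have HDu : D u = (54 * s ^+ 2 + 26 * s + 4) * D s * u / (2 * PP s).
  have h := congr1 D Hcurve. dsimpin HD h.
  have e : D u = (54 * s ^+ 2 + 26 * s + 4) * D s * u / (2 * u ^+ 2).
    have -> : D u = (2%:R * u ^+ 1 * D u) / (2 * u).
      by field; nzc.
    rewrite h.
    field; nzc.
  by rewrite Hcurve in e.
have Hy : y = 1/2 + a_e s * u.
  have e : y = 1/2 + NA s / (4 * f5 s * f1 s ^+ 2 * u ^+ 2) * u.
    by rewrite /y /y_Pi; field; nzc.
  by rewrite Hcurve in e.
have Hte : t = 1/2 + b_e s * u.
  have e : t = 1/2 + NB s / (f1 s ^+ 3 * (u ^+ 2) ^+ 2) * u.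
    by rewrite /t /t_Pi; field; nzc.
  by rewrite Hcurve in e.
have Hda : 4 * f5 s * f1 s ^+ 2 * PP s != 0 by rewrite !mulf_eq0 !negb_or !(negbTE Hs1, negbTE Hs5, negbTE Hf2, negbTE Hf9, negbTE H4).
have Hdb : f1 s ^+ 3 * PP s ^+ 2 != 0 by rewrite !mulf_eq0 !negb_or !(negbTE Hs1, negbTE Hs5, negbTE Hf2, negbTE Hf9, negbTE H4).
have HDy : D y = al_e s * u * D s.
  rewrite Hy. dsimp HD. rewrite (DV HD _ Hda). dsimp HD. rewrite HDu.
  by field; nzc.
have HDt : D t = be_e s * u * D s.
  rewrite Hte. dsimp HD. rewrite (DV HD _ Hdb). dsimp HD. rewrite HDu.
  by field; nzc.
have HDt0 : D t != 0 := Ht.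
rewrite HDt in HDt0.
have Hds : D s != 0 by apply: contra HDt0 => /eqP ->; rewrite mulr0.
have HNb : Nbeta s != 0 by apply: contra HDt0 => /eqP ->; rewrite !mul0r.
have Hy1e : y1 = c_e s.
  { rewrite /y1 HDy HDt; field; nzc. all: nzh HNb. }
have Hdc : 4 * f5 s ^+ 2 * f2 s * Nbeta s != 0.
  by rewrite !mulf_eq0 !negb_or !(negbTE Hs1, negbTE Hs5, negbTE Hf2, negbTE Hf9, negbTE H4, negbTE HNb).
have HDc : D (c_e s) = ga_e s * D s.
  dsimp HD. rewrite (DV HD _ Hdc). dsimp HD.
  { field; nzc. all: nzh HNb. }
have Hy2e : y2 = g_e s * u.
  rewrite /y2 Hy1e HDc HDt.
  have e : ga_e s * D s / (be_e s * u * D s) = ga_e s / (be_e s * u ^+ 2) * u.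
    { field; nzc. all: nzh HNb. }
  rewrite Hcurve in e. rewrite e.
  { field; nzc. all: nzh HNb. }
have HYa : Ya_e s != 0.
  have e : y * (y - 1) = a_e s ^+ 2 * u ^+ 2 - 1/4 by rewrite Hy; field; nzc.
  rewrite Hcurve in e.
  have e2 : Ya_e s = a_e s ^+ 2 * PP s - 1/4 by field; nzc.
  by rewrite e2 -e mulf_neq0 // subr_eq0.
have HTb : Tb_e s != 0.
  have e : t * (t - 1) = b_e s ^+ 2 * u ^+ 2 - 1/4 by rewrite Hte; field; nzc.
  rewrite Hcurve in e.
  have e2 : Tb_e s = b_e s ^+ 2 * PP s - 1/4 by field; nzc.
  by rewrite e2 -e mulf_neq0 // subr_eq0.
have HAB : AB_e s != 0.
  have e : y - t = (a_e s - b_e s) * u by rewrite Hy Hte; ring.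
  have e2 : AB_e s = a_e s - b_e s by field; nzc.
  have : y - t != 0 by rewrite subr_eq0.
  by rewrite e mulf_eq0 negb_or e2 => /andP [].
have HNYa : NYa s != 0 by apply: contra HYa => /eqP ->; rewrite mul0r.
have HNTb : NTb s != 0 by apply: contra HTb => /eqP ->; rewrite mul0r.
have HNAB : NAB s != 0 by apply: contra HAB => /eqP ->; rewrite mul0r.
rewrite Hte Hy Hy1e Hy2e.
apply: (@genL K Hn _ _ _ _ u (PP s) (Ya_e s) (Tb_e s) (AB_e s)) => //.
- by field; nzc.
- by field; nzc.
- by field; nzc.
- field; nzc. all: nzh HNb. all: nzh HNYa. all: nzh HNTb. all: nzh HNAB.
Qed.
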